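(* Let $T$ be a finite tree with $m$ interior edges, and let $\mathcal{S}$ be the collection of all subtrees of $T$ that have exactly one interior edge. Then $$\sum_{S\in\mathcal{S}}(-1)^{|S|}=-m,$$ where $|S|$ denotes the number of edges of $S$.
   Context: A subtree of $T$ is a nonempty connected subgraph of $T$, identified with its (nonempty) edge set. An edge of a subtree $S$ is a leaf (edge) of $S$ if one of its endpoints has degree $1$ in $S$; an edge of $S$ is interior in $S$ if it is not a leaf of $S$. An interior edge of $T$ is an edge of $T$ that is interior in $T$ itself, i.e. neither endpoint is a leaf vertex of $T$. *)

(* Defs.v *)
From mathcomp Require Import all_boot all_order all_algebra.
Set Implicit Arguments. Unset Strict Implicit. Unset Printing Implicit Defensive.

(* A finite graph on vertex type V : finType with adjacency relation e.
   Edges are identified with 2-element vertex sets {x, y}. *)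
Section Tree.
Variable V : finType.

Definition edgeset (e : rel V) : {set {set V}} :=
  [set E : {set V} | [exists x, exists y, e x y && (E == [set x; y])]].

Definition is_tree (e : rel V) : Prop :=
  [/\ symmetric e, irreflexive e,
      (forall x y : V, connect e x y) &
      (forall c : seq V, uniq c -> 2 < size c -> ~~ cycle e c)].

Definition verts (S : {set {set V}}) : {set V} := \bigcup_(E in S) E.

Definition deg (S : {set {set V}}) (v : V) : nat := #|[set E in S | v \in E]|.

Definition leaf_in (S : {set {set V}}) (E : {set V}) : bool :=
  (E \in S) && [exists v in E, deg S v == 1].

Definition interior_in (S : {set {set V}}) (E : {set V}) : bool :=
  (E \in S) && ~~ leaf_in S E.

Definition interior_edges (S : {set {set V}}) : {set {set V}} :=
  [set E in S | interior_in S E].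

Definition subtree (e : rel V) (S : {set {set V}}) : bool :=
  [&& S != set0, S \subset edgeset e &
      [forall x in verts S, forall y in verts S,
          connect [rel a b | [set a; b] \in S] x y]].

End Tree.

(* Main.v *)
Require Import Defs.
From mathcomp Require Import all_boot all_order all_algebra zify.
Import GRing.Theory.
Set Implicit Arguments. Unset Strict Implicit. Unset Printing Implicit Defensive.

Lemma edgesetP (V : finType) (e : rel V) E :
  reflect (exists p q, e p q /\ E = [set p; q]) (E \in edgeset e).
Proof.
rewrite inE; apply: (iffP existsP) => [[p /existsP [q /andP [epq /eqP ->]]]|[p [q [epq ->]]]].
  by exists p, q.
by exists p; apply/existsP; exists q; rewrite epq eqxx.
Qed.

Lemma edge_eq (V : finType) (e : rel V) E y z :
  E \in edgeset e -> y \in E -> z \in E -> y != z -> E = [set y; z].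
Proof.
move=> /edgesetP [p [q [epq ->]]]; rewrite !inE.
case/orP=> /eqP -> ; case/orP=> /eqP -> ; rewrite ?eqxx // => _.
by rewrite setUC.
Qed.

Lemma edge_adj (V : finType) (e : rel V) E y z :
  symmetric e -> E \in edgeset e -> y \in E -> z \in E -> y != z -> e y z.
Proof.
move=> sym /edgesetP [p [q [epq ->]]]; rewrite !inE.
by case/orP=> /eqP -> ; case/orP=> /eqP -> ; rewrite ?eqxx // => _; rewrite sym.
Qed.

Lemma deg2 (V : finType) (S : {set {set V}}) E1 E2 w :
  E1 \in S -> E2 \in S -> E1 != E2 -> w \in E1 -> w \in E2 -> (1 < deg S w)%N.
Proof.
move=> h1 h2 h12 w1 w2.
have : [set E1; E2] \subset [set E in S | w \in E].
  by apply/subsetP=> E; rewrite !inE => /orP [] /eqP ->; rewrite ?h1 ?h2 ?w1 ?w2.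
by move/subset_leq_card; rewrite cards2 h12.
Qed.

Lemma other_edge (V : finType) (X : {set {set V}}) E w :
  E \in X -> w \in E -> deg X w != 1%N -> exists2 E', E' \in X & (E' != E) && (w \in E').
Proof.
move=> EX wE d1.
case: (boolP [exists E' in X, (E' != E) && (w \in E')]) => [/exists_inP [E' H1 H2]|/exists_inPn H].
  by exists E'.
case/negP: d1; apply/cards1P; exists E; apply/setP => E'; rewrite !inE.
case: (eqVneq E' E) => [->|ne]; first by rewrite EX wE.
apply/negbTE/negP => /andP [E'X wE']; move: (H E' E'X); by rewrite ne wE'.
Qed.

Lemma intE (V : finType) (S : {set {set V}}) E :
  (E \in interior_edges S) = (E \in S) && [forall v in E, deg S v != 1%N].
Proof.
rewrite !inE /interior_in /leaf_in; case: (E \in S) => //=.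
by rewrite negb_exists_in.
Qed.

Lemma int_mono (V : finType) (S X : {set {set V}}) E :
  S \subset X -> E \in interior_edges S -> E \in interior_edges X.
Proof.
move=> SX; rewrite !intE => /andP [ES /forall_inP H].
rewrite (subsetP SX) //=; apply/forall_inP => z zE.
have [E' E'S /andP [E'E zE']] := other_edge ES zE (H z zE).
rewrite gtn_eqF //; apply: (deg2 (E1 := E) (E2 := E')); rewrite ?(subsetP SX) //.
by rewrite eq_sym.
Qed.

Definition P0 (V : finType) (e : rel V) u v f (S : {set {set V}}) :=
  (f \in S) && [forall E in S, (E \in edgeset e) && ((u \in E) || (v \in E))].
Definition Aex (V : finType) (w : V) (f : {set V}) (S : {set {set V}}) :=
  [exists E in S, (E != f) && (w \in E)].

Lemma bad (V : finType) (S : {set {set V}}) f w x E' :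
  interior_edges S = [set f] -> w \in f -> x \notin f -> [set x; w] \in S ->
  E' \in S -> x \in E' -> E' != [set x; w] -> False.
Proof.
move=> IS wf xf hS E'S xE' E'h.
have fS : f \in S by have := set11 f; rewrite -IS intE => /andP [].
have hf : [set x; w] != f by apply: contraNneq xf => <-; rewrite set21.
have : [set x; w] \in interior_edges S.
  rewrite intE hS; apply/forall_inP => z; rewrite !inE => /orP [] /eqP ->.
    by rewrite gtn_eqF //; apply: (deg2 (E1 := [set x; w]) (E2 := E')); rewrite ?set21 // eq_sym.
  by rewrite gtn_eqF //; apply: (deg2 (E1 := [set x; w]) (E2 := f)); rewrite ?set22.
by rewrite IS inE (negbTE hf).
Qed.

Lemma forward (V : finType) (e : rel V) (u v : V) S :
  is_tree e -> u != v -> subtree e S -> interior_edges S = [set [set u; v]] ->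
  [&& P0 e u v [set u;v] S, Aex u [set u;v] S & Aex v [set u;v] S].
Proof.
move=> [sym irr _ cyc] uv /and3P [S0 Ssub /forall_inP Scon] IS.
set f := [set u; v].
have fI : f \in interior_edges S by rewrite IS set11.
have fS : f \in S by move: fI; rewrite intE => /andP [].
have Aw : forall w, w \in f -> Aex w f S.
  move=> w wf; move: fI; rewrite intE => /andP [_ /forall_inP /(_ w wf) dw].
  have [E' E'S /andP [E'f wE']] := other_edge fS wf dw.
  by apply/exists_inP; exists E'; rewrite ?E'f.
rewrite /P0 fS !Aw ?set21 ?set22 //= andbT.
apply/forall_inP => E ES; rewrite (subsetP Ssub) //=.
apply/negPn/negP; rewrite negb_or => /andP [uE vE].
have [p [q [epq Epq]]] := edgesetP _ _ ((subsetP Ssub) E ES).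
have pE : p \in E by rewrite Epq set21.
have pf : p \notin f.
  by rewrite !inE; apply/negP => /orP [] /eqP pe; [move: uE|move: vE]; rewrite -pe pE.
pose W := fun z => (z \in f) || ([set z; u] \in S) || ([set z; v] \in S).
have Wcl : forall z z', W z -> [set z; z'] \in S -> W z'.
  move=> z z' Wz zz'S; rewrite /W.
  have [zf|zf] := boolP (z \in f).
    move: zf; rewrite !inE => /orP [] /eqP zeq; subst z; rewrite setUC in zz'S;
      by rewrite zz'S !orbT.
  case: (eqVneq z' z) => [->|z'z]; first by [].
  have ne : forall w, w \in f -> z' != w -> [set z; z'] != [set z; w].
    move=> w wf z'w; apply/negP => /eqP eq.
    have : z' \in [set z; w] by rewrite -eq set22.
    by rewrite !inE (negbTE z'z) (negbTE z'w).
  case/orP: Wz => [/orP [zf'|zuS]|zvS]; first by rewrite zf' in zf.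
    case: (eqVneq z' u) => [->|z'u]; first by rewrite set21.
    by case: (bad IS (set21 u v) zf zuS zz'S (set21 z z') (ne u (set21 u v) z'u)).
  case: (eqVneq z' v) => [->|z'v]; first by rewrite set22.
  by case: (bad IS (set22 u v) zf zvS zz'S (set21 z z') (ne v (set22 u v) z'v)).
have pW : W p.
  have uV : u \in verts S by apply/bigcupP; exists f; rewrite ?set21.
  have pV : p \in verts S by apply/bigcupP; exists E.
  have /connectP [s ps ->] := forall_inP (Scon u uV) p pV.
  have Wu : W u by rewrite /W set21.
  move: (u) Wu ps; elim: s => [|y s IH] z //= Wz /andP [rzy ps].
  exact: IH (Wcl _ _ Wz rzy) ps.
case/orP: pW => [/orP [pf'|puS]|pvS]; first by rewrite pf' in pf.
  apply: (bad IS (set21 u v) pf puS ES pE).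
  by apply: contraNneq uE => ->; rewrite set22.
apply: (bad IS (set22 u v) pf pvS ES pE).
by apply: contraNneq vE => ->; rewrite set22.
Qed.

Lemma leaf_side (V : finType) (e : rel V) w w' (S : {set {set V}}) E :
  is_tree e -> e w w' ->
  (forall E, E \in S -> (E \in edgeset e) && ((w \in E) || (w' \in E))) ->
  E \in S -> w \in E -> E != [set w; w'] -> E \notin interior_edges S.
Proof.
move=> [sym irr _ cyc] eww SP ES wE Ef.
have /andP [EE _] := SP E ES.
have [p [q [epq Epq]]] := edgesetP _ _ EE.
have [x [xE xw]] : exists x, x \in E /\ x != w.
  case: (eqVneq p w) => [pw|pw]; [exists q|exists p]; rewrite Epq !inE eqxx ?orbT; split => //.
  rewrite -pw; apply: contraTneq epq => ->; by rewrite irr.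
have wx : w != x by rewrite eq_sym.
have Ewx : E = [set w; x] := edge_eq EE wE xE wx.
have ewx : e w x := edge_adj sym EE wE xE wx.
have xw' : x != w' by apply: contraNneq Ef => xw'; rewrite Ewx xw'.
have ww' : w != w' by apply: contraTneq eww => ->; rewrite irr.
rewrite intE ES /=; apply/negP => /forall_inP /(_ x xE); apply/negP; rewrite negbK.
apply/cards1P; exists E; apply/setP => E'; rewrite !inE.
apply/andP/eqP => [[E'S xE']|->]; last by rewrite ES xE.
have /andP [E'E /orP [wE'|w'E']] := SP E' E'S.
  by rewrite Ewx; apply: edge_eq E'E wE' xE' wx.
have exw' : e x w' := edge_adj sym E'E xE' w'E' xw'.
have := cyc [:: w; x; w']; rewrite /= !inE !negb_or wx ww' xw' ewx exw' /=.
by rewrite sym eww => /(_ isT isT).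
Qed.

Lemma backward (V : finType) (e : rel V) u v S : is_tree e -> e u v ->
  [&& P0 e u v [set u;v] S, Aex u [set u;v] S & Aex v [set u;v] S] ->
  subtree e S && (interior_edges S == [set [set u;v]]).
Proof.
move=> tree euv.
have [sym irr _ cyc] := tree.
move=> /and3P [/andP [fS /forall_inP SP] /exists_inP [a aS /andP [af ua]] /exists_inP [b bS /andP [bf vb]]].
set f := [set u;v].
have uv : u != v by apply: contraTneq euv => ->; rewrite irr.
have SE : forall E, E \in S -> E \in edgeset e by move=> E /SP /andP [].
have Suv : forall E, E \in S -> (u \in E) || (v \in E) by move=> E /SP /andP [].
have conn : forall E y z, E \in S -> y \in E -> z \in E ->
    connect [rel a b | [set a; b] \in S] y z.
  move=> E0 y0 z0 E0S yE zE; case: (eqVneq y0 z0) => [->|yz]; first exact: connect0.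
  by apply: connect1; rewrite /= -(edge_eq (SE _ E0S) yE zE yz).
have toU : forall E z, E \in S -> z \in E ->
    connect [rel a b | [set a; b] \in S] z u /\ connect [rel a b | [set a; b] \in S] u z.
  move=> E z ES zE; case/orP: (Suv E ES) => [uE|vE].
    by split; apply: (conn E).
  split; apply: connect_trans.
  - exact: (conn E z v).
  - exact: (conn f v u fS (set22 u v) (set21 u v)).
  - exact: (conn f u v fS (set21 u v) (set22 u v)).
  - exact: (conn E v z).
apply/andP; split; first (apply/and3P; split).
- by apply/set0Pn; exists f.
- by apply/subsetP => E /SE.
- apply/forall_inP => x /bigcupP [E ES xE]; apply/forall_inP => y /bigcupP [E' E'S yE'].
  exact: connect_trans (toU E x ES xE).1 (toU E' y E'S yE').2.
apply/eqP/setP => E; rewrite in_set1.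
case: (eqVneq E f) => [->|Ef].
  rewrite intE fS; apply/forall_inP => z; rewrite !inE => /orP [] /eqP ->; rewrite gtn_eqF //.
    by apply: (deg2 (E1 := f) (E2 := a)); rewrite // ?set21 // eq_sym.
  by apply: (deg2 (E1 := f) (E2 := b)); rewrite // ?set22 // eq_sym.
apply/negbTE.
have [ES|ES] := boolP (E \in S); last by rewrite intE (negbTE ES).
case/orP: (Suv E ES) => [uE|vE].
  exact: (leaf_side tree euv SP ES uE Ef).
have evu : e v u by rewrite sym.
have SP' : forall E, E \in S -> (E \in edgeset e) && ((v \in E) || (u \in E)).
  by move=> E0 /SP; rewrite orbC.
by apply: (leaf_side tree evu SP' ES vE); rewrite setUC.
Qed.

Definition toggle (T : finType) (z : T) (S : {set T}) :=
  if z \in S then S :\ z else z |: S.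

Lemma toggleK (T : finType) (z : T) : involutive (toggle z).
Proof.
move=> S; rewrite /toggle; case zS: (z \in S).
  by rewrite !inE eqxx /= setD1K.
by rewrite setU11 setU1K // zS.
Qed.

Lemma mem_toggle_neq (T : finType) (a : T) S E : E != a -> (E \in toggle a S) = (E \in S).
Proof. by move=> Ea; rewrite /toggle; case: ifP; rewrite !inE (negbTE Ea). Qed.

Lemma forall_toggle (T : finType) (a : T) S (q : pred T) :
  q a -> [forall E in toggle a S, q E] = [forall E in S, q E].
Proof.
move=> qa; apply/forall_inP/forall_inP => H E ES.
  case: (eqVneq E a) => [->|Ea] //; apply: H; by rewrite mem_toggle_neq.
case: (eqVneq E a) => [->|Ea] //; apply: H; by rewrite -(mem_toggle_neq S Ea).
Qed.

Lemma exists_toggle (T : finType) (a : T) S (q : pred T) :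
  ~~ q a -> [exists E in toggle a S, q E] = [exists E in S, q E].
Proof.
move=> qa; apply: negb_inj; rewrite !negb_exists_in.
exact: (forall_toggle S (q := fun x => ~~ q x)).
Qed.



Section RS.
Local Open Scope ring_scope.
Lemma toggle_sum (T : finType) (P : pred {set T}) (z : T) :
  (forall S, P (toggle z S) = P S) -> \sum_(S | P S) (-1 : int) ^+ #|S| = 0.
Proof.
move=> HP.
have Fs : forall S, (-1:int) ^+ #|toggle z S| = - (-1) ^+ #|S|.
  move=> S; rewrite /toggle; case: ifP => zS.
    by rewrite [in RHS](cardsD1 z S) zS /= add1n exprS mulN1r opprK.
  by rewrite cardsU1 zS /= add1n exprS mulN1r.
have : \sum_(S | P S) (-1 : int) ^+ #|S| = - \sum_(S | P S) (-1 : int) ^+ #|S|.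
  rewrite {1}(reindex_inj (inv_inj (toggleK z))) /= -sumrN.
  by apply: eq_big => S; [rewrite HP | move=> _; rewrite Fs].
lia.
Qed.

Lemma inner (V : finType) (e : rel V) u v a b :
  a \in edgeset e -> u \in a -> v \notin a -> b \in edgeset e -> v \in b -> u \notin b -> e u v ->
  \sum_(S | [&& P0 e u v [set u; v] S, Aex u [set u; v] S & Aex v [set u; v] S])
     (-1:int)^+#|S| = -1.
Proof.
move=> aE ua va bE vb ub euv.
set f := [set u; v].
have af : a != f by apply: contraNneq va => ->; rewrite set22.
have bf : b != f by apply: contraNneq ub => ->; rewrite set21.
have fE : f \in edgeset e by apply/edgesetP; exists u, v.
have P0a : forall S, P0 e u v f (toggle a S) = P0 e u v f S.
  move=> S; rewrite /P0 (mem_toggle_neq _ (negbT (introF eqP (fun h => negP af (introT eqP (esym h)))))) forall_toggle //= aE ua //.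
have P0b : forall S, P0 e u v f (toggle b S) = P0 e u v f S.
  move=> S; rewrite /P0 (mem_toggle_neq _ (negbT (introF eqP (fun h => negP bf (introT eqP (esym h)))))) forall_toggle //= bE vb orbT //.
have Ba : forall S, Aex v f (toggle a S) = Aex v f S.
  by move=> S; rewrite /Aex exists_toggle //= (negbTE va) andbF.
have Ab : forall S, Aex u f (toggle b S) = Aex u f S.
  by move=> S; rewrite /Aex exists_toggle //= (negbTE ub) andbF.
have h1 : \sum_(S | (P0 e u v f S && Aex v f S) && Aex u f S) (-1:int)^+#|S|
        + \sum_(S | (P0 e u v f S && Aex v f S) && ~~ Aex u f S) (-1:int)^+#|S| = 0.
  rewrite -bigID; apply: (toggle_sum (z := a)) => S; by rewrite P0a Ba.
have h2 : \sum_(S | (P0 e u v f S && ~~ Aex u f S) && Aex v f S) (-1:int)^+#|S|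
        + \sum_(S | (P0 e u v f S && ~~ Aex u f S) && ~~ Aex v f S) (-1:int)^+#|S| = 0.
  rewrite -bigID; apply: (toggle_sum (z := b)) => S; by rewrite P0b Ab.
have h3 : \sum_(S | (P0 e u v f S && ~~ Aex u f S) && ~~ Aex v f S) (-1:int)^+#|S| = -1.
  rewrite (big_pred1 [set f]); first by rewrite cards1 expr1.
  move=> S /=; apply/idP/eqP.
    move=> /andP [/andP [/andP [fS /forall_inP SP] nA] nB].
    apply/eqP; rewrite eqEsubset sub1set fS andbT; apply/subsetP => E ES; rewrite inE.
    apply/negPn/negP => Ef; have /andP [_ /orP [uE|vE]] := SP E ES.
      by move/negP: nA; apply; apply/exists_inP; exists E; rewrite // Ef uE.
    by move/negP: nB; apply; apply/exists_inP; exists E; rewrite // Ef vE.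
  move=> ->; rewrite /P0 /Aex set11 /=.
  apply/andP; split; first (apply/andP; split).
  - by apply/forall_inP => E; rewrite inE => /eqP ->; rewrite fE set21.
  - by apply/exists_inP => [[E]]; rewrite inE => /eqP ->; rewrite eqxx.
  - by apply/exists_inP => [[E]]; rewrite inE => /eqP ->; rewrite eqxx.
have h4 : \sum_(S | (P0 e u v f S && Aex v f S) && ~~ Aex u f S) (-1:int)^+#|S| =
          \sum_(S | (P0 e u v f S && ~~ Aex u f S) && Aex v f S) (-1:int)^+#|S|.
  by apply: eq_bigl => S; case: (P0 _ _ _ _ S); case: (Aex u f S); case: (Aex v f S).
have h5 : \sum_(S | [&& P0 e u v f S, Aex u f S & Aex v f S]) (-1:int)^+#|S| =
          \sum_(S | (P0 e u v f S && Aex v f S) && Aex u f S) (-1:int)^+#|S|.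
  by apply: eq_bigl => S; case: (P0 _ _ _ _ S); case: (Aex u f S); case: (Aex v f S).
lia.
Qed.

End RS.

Lemma pick1 (T : finType) (x0 E0 : T) (A : {set T}) : A = [set E0] -> odflt x0 [pick E in A] = E0.
Proof. by move=> ->; case: pickP => [x /set1P -> //| /(_ E0)]; rewrite /= set11. Qed.



Local Open Scope ring_scope.

Theorem theorem4p7 (V : finType) (e : rel V) (m : nat) :
  is_tree e ->
  #|interior_edges (edgeset e)| = m ->
  \sum_(S : {set {set V}} | subtree e S && (#|interior_edges S| == 1%N))
      (-1 : int) ^+ #|S| = - (m%:Z).
Proof.
move=> tree <-.
have [sym irr _ cyc] := tree.
set IT := interior_edges (edgeset e).
pose pS (S : {set {set V}}) := odflt set0 [pick E in interior_edges S].
rewrite (partition_big pS (fun f => f \in IT)); last first.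
  move=> S /andP [/and3P [_ sub _] /cards1P [E0 IE]].
  rewrite /pS (pick1 _ IE); apply: int_mono sub _; by rewrite IE set11.
rewrite (eq_bigr (fun _ => -1)); first by rewrite sumr_const mulNrn natz.
move=> f fI.
have fE : f \in edgeset e by move: fI; rewrite intE => /andP [].
have [u [v [euv fuv]]] := edgesetP _ _ fE.
have uv : u != v by apply: contraTneq euv => ->; rewrite irr.
have dfI : forall w, w \in f -> deg (edgeset e) w != 1%N.
  by move: fI; rewrite intE => /andP [_ /forall_inP].
have uf : u \in f by rewrite fuv set21.
have vf : v \in f by rewrite fuv set22.
have [a aE /andP [af ua]] := other_edge fE uf (dfI u uf).
have [b bE /andP [bf vb]] := other_edge fE vf (dfI v vf).
have va : v \notin a.
  by apply: contraNN af => va; rewrite fuv (edge_eq aE ua va uv).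
have ub : u \notin b.
  by apply: contraNN bf => ub; rewrite fuv (edge_eq bE ub vb uv).
rewrite -[RHS](inner aE ua va bE vb ub euv); apply: eq_bigl => S.
have -> : (subtree e S && (#|interior_edges S| == 1%N)) && (pS S == f) =
          subtree e S && (interior_edges S == [set f]).
  case: (subtree e S) => //=; apply/andP/eqP => [[/cards1P [E0 IE] /eqP pE]|IE].
    by move: pE; rewrite /pS (pick1 _ IE) IE => ->.
  by rewrite /pS (pick1 _ IE) IE cards1 eqxx.
rewrite fuv; apply/idP/idP => [/andP [st /eqP IS]|H].
  exact: forward.
exact: backward.
Qed.
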